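(* Let $X$ be a metric space. Then no asymptotic cone of $X$ contains an isometric copy of the Riemannian circle of unit length if and only if $X$ does not approximate $n$-gons.
   Context: $S_n^0$ is the vertex set of the cycle graph $S_n$ of length $n$ (a Riemannian circle of length $n$ with $n$ equally spaced vertices) with the induced metric, and $\lambda S_n^0$ is it with the metric scaled by $\lambda>0$. $X$ approximates $n$-gons if for every $K>1$ and every $n\in\mathbb N$ there exist $K$-bilipschitz embeddings $\lambda S_n^0\to X$ for arbitrarily large $\lambda>0$. Asymptotic cone: for a nonprincipal ultrafilter $\mathscr U$ on $\mathbb N$, basepoints $b^{(m)}\in X$ and scalars $s^{(m)}>0$ with $s^{(m)}\to\infty$, take sequences $(x_m)$ with $d(x_m,b^{(m)})/s^{(m)}$ bounded, pseudometric $\lim_{\mathscr U}d(x_m,x'_m)/s^{(m)}$, and pass to the metric quotient. *)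

(* Defs.v *)
From Stdlib Require Import Reals Lra Classical.
Open Scope R_scope.

Definition is_metric {X : Type} (d : X -> X -> R) : Prop :=
  (forall x y, 0 <= d x y) /\
  (forall x y, d x y = 0 <-> x = y) /\
  (forall x y, d x y = d y x) /\
  (forall x y z, d x z <= d x y + d y z).

Definition is_ultrafilter (U : (nat -> Prop) -> Prop) : Prop :=
  U (fun _ => True) /\
  ~ U (fun _ => False) /\
  (forall A B : nat -> Prop, U A -> (forall n, A n -> B n) -> U B) /\
  (forall A B : nat -> Prop, U A -> U B -> U (fun n => A n /\ B n)) /\
  (forall A : nat -> Prop, U A \/ U (fun n => ~ A n)).

Definition is_principal (U : (nat -> Prop) -> Prop) : Prop :=
  exists k : nat, forall A : nat -> Prop, U A <-> A k.

Definition nonprincipal_ultrafilter (U : (nat -> Prop) -> Prop) : Prop :=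
  is_ultrafilter U /\ ~ is_principal U.

Definition ultralim (U : (nat -> Prop) -> Prop) (u : nat -> R) (L : R) : Prop :=
  forall eps, 0 < eps -> U (fun m => Rabs (u m - L) < eps).

Definition scaling_seq (s : nat -> R) : Prop :=
  (forall m, 0 < s m) /\
  (forall M, exists N, forall m, (N <= m)%nat -> M < s m).

(** Sequences (x_m) with d(x_m, b_m)/s_m bounded: the points (before
    quotienting) of the asymptotic cone with basepoints b and scalars s. *)
Definition cone_seq {X : Type} (d : X -> X -> R) (b : nat -> X) (s : nat -> R)
  (x : nat -> X) : Prop :=
  exists C, forall m, d (x m) (b m) / s m <= C.

Definition cone_dist_is {X : Type} (d : X -> X -> R) (U : (nat -> Prop) -> Prop)
  (s : nat -> R) (x x' : nat -> X) (L : R) : Prop :=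
  ultralim U (fun m => d (x m) (x' m) / s m) L.

(** Riemannian circle of unit length, parametrized by [0,1), intrinsic metric. *)
Definition circle1_dist (t t' : R) : R :=
  Rmin (Rabs (t - t')) (1 - Rabs (t - t')).

(** The asymptotic cone (U, b, s) of (X,d) contains an isometric copy of the
    unit-length circle: there is a map from the circle to the cone (given by
    choosing representative sequences of the image points) preserving distances. *)
Definition cone_contains_unit_circle {X : Type} (d : X -> X -> R)
  (U : (nat -> Prop) -> Prop) (b : nat -> X) (s : nat -> R) : Prop :=
  exists f : R -> (nat -> X),
    (forall t, 0 <= t < 1 -> cone_seq d b s (f t)) /\
    (forall t t', 0 <= t < 1 -> 0 <= t' < 1 ->
       cone_dist_is d U s (f t) (f t') (circle1_dist t t')).

(** Vertex metric of the cycle S_n^0: vertices 0..n-1, distance along S_n. *)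
Definition cycle_dist (n i j : nat) : R :=
  Rmin (Rabs (INR i - INR j)) (INR n - Rabs (INR i - INR j)).

Definition bilip_ngon {X : Type} (d : X -> X -> R) (K lambda : R) (n : nat)
  (f : nat -> X) : Prop :=
  forall i j, (i < n)%nat -> (j < n)%nat ->
    (lambda * cycle_dist n i j) / K <= d (f i) (f j) /\
    d (f i) (f j) <= K * (lambda * cycle_dist n i j).

Definition approximates_ngons {X : Type} (d : X -> X -> R) : Prop :=
  forall K, 1 < K -> forall n : nat, forall Lambda : R,
    exists lambda, Lambda < lambda /\ 0 < lambda /\
      exists f : nat -> X, bilip_ngon d K lambda n f.

(* Main.v *)
Require Import Defs.
From Stdlib Require Import Reals.
From mathcomp Require ssreflect ssrbool ssrnat boolp classical_sets filter.

Module UFaux.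
Import ssreflect ssrbool ssrnat boolp classical_sets filter.

Lemma exists_nonprincipal : exists U : (nat -> Prop) -> Prop,
  nonprincipal_ultrafilter U /\ (forall N, U (fun n => (N <= n)%coq_nat)).
Proof.
have [G [UG sub]] := ultraFilterLemma (@eventually_filter).
have ev : forall N, G (fun n => (N <= n)%coq_nat).
  move=> N; apply: sub; exists N => // n /= /leP; done.
have FG : Filter G by apply: filter_filter.
exists G; split; last exact: ev.
split.
  split; first exact: (@filterT _ _ FG).
  split; first by move=> H; apply: (@filter_not_empty _ G _); exact H.
  split; first by move=> A B GA AB; apply: (@filterS _ _ FG A B) => // x; apply: AB.
  split; first by move=> A B GA GB; apply: (@filterI _ _ FG A B).
  move=> A; exact: (in_ultra_setVsetC A UG).
case=> k Hk.
have := ev (S k); move/Hk => /=. move=> H; exact: (PeanoNat.Nat.nle_succ_diag_l k H).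
Qed.
End UFaux.
From Stdlib Require Import ZArith Reals Lra Lia Classical ClassicalEpsilon.
Open Scope R_scope.

Lemma nat_unb (M : R) : exists N : nat, M < INR N.
Proof. destruct (INR_archimed 1 M) as [N HN]; [lra|exists N; lra]. Qed.

Definition fl (x : R) : nat := Z.to_nat (Int_part x).

Lemma fl_spec x : 0 <= x -> INR (fl x) <= x < INR (fl x) + 1.
Proof.
  intros Hx. destruct (base_Int_part x) as [H1 H2].
  assert (Hz : (0 <= Int_part x)%Z).
  { assert (IZR (Int_part x) > -1) by lra.
    assert (-1 < Int_part x)%Z by (apply lt_IZR; lra). lia. }
  unfold fl. rewrite INR_IZR_INZ, Z2Nat.id by exact Hz. lra.
Qed.

Lemma fl_lt x n : 0 <= x -> x < INR n -> (fl x < n)%nat.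
Proof.
  intros H0 H1. destruct (fl_spec x H0). apply INR_lt. lra.
Qed.

Lemma abs_inv x e : Rabs x <= e -> -e <= x <= e.
Proof. unfold Rabs; destruct (Rcase_abs x); lra. Qed.

Lemma abs_inv_lt x e : Rabs x < e -> -e < x < e.
Proof. unfold Rabs; destruct (Rcase_abs x); lra. Qed.

Lemma Rmin_lip a b A B e : Rabs (a - A) <= e -> Rabs (b - B) <= e ->
  Rabs (Rmin a b - Rmin A B) <= e.
Proof.
  intros H1 H2. apply Rabs_le. apply abs_inv in H1. apply abs_inv in H2.
  unfold Rmin; repeat destruct (Rle_dec _ _); lra.
Qed.

Lemma cycle_le n i j : cycle_dist n i j <= INR n.
Proof.
  unfold cycle_dist. pose proof (Rabs_pos (INR i - INR j)).
  unfold Rmin; destruct (Rle_dec _ _); lra.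
Qed.

Lemma cycle_ge0 n i j : (i < n)%nat -> (j < n)%nat -> 0 <= cycle_dist n i j.
Proof.
  intros Hi Hj. apply lt_INR in Hi. apply lt_INR in Hj.
  pose proof (pos_INR i). pose proof (pos_INR j).
  unfold cycle_dist, Rmin, Rabs. repeat destruct (Rle_dec _ _); repeat destruct (Rcase_abs _); lra.
Qed.

Lemma cycle_ge1 n i j : (i < n)%nat -> (j < n)%nat -> i <> j -> 1 <= cycle_dist n i j.
Proof.
  intros Hi Hj Hij.
  assert (Hc : (S i <= j)%nat \/ (S j <= i)%nat) by lia.
  apply lt_INR in Hi. apply lt_INR in Hj.
  assert (INR i + 1 <= INR j \/ INR j + 1 <= INR i) as Hc'.
  { destruct Hc as [Hc|Hc]; apply le_INR in Hc; rewrite S_INR in Hc; lra. }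
  assert (INR i + 1 <= INR n).
  { rewrite <- S_INR. apply le_INR. apply INR_lt in Hi. lia. }
  assert (INR j + 1 <= INR n).
  { rewrite <- S_INR. apply le_INR. apply INR_lt in Hj. lia. }
  pose proof (pos_INR i). pose proof (pos_INR j).
  unfold cycle_dist, Rmin, Rabs. repeat destruct (Rle_dec _ _); repeat destruct (Rcase_abs _); lra.
Qed.

Lemma cycle_same n i : cycle_dist n i i = 0.
Proof.
  unfold cycle_dist. replace (INR i - INR i) with 0 by ring. rewrite Rabs_R0.
  pose proof (pos_INR n). unfold Rmin; destruct (Rle_dec _ _); lra.
Qed.

Lemma U_nonempty U (HU : is_ultrafilter U) A : U A -> exists m, A m.
Proof.
  intros HA. destruct HU as (_ & H0 & HS & _).
  destruct (classic (exists m, A m)) as [?|Hn]; [assumption|].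
  exfalso. apply H0. apply (HS A); [assumption|]. intros m Am. apply Hn. eauto.
Qed.

Lemma U_cofinite U (HU : nonprincipal_ultrafilter U) : forall N, U (fun m => (N <= m)%nat).
Proof.
  destruct HU as [HU Hnp]. pose proof HU as HU'. destruct HU' as (HT & H0 & HS & HI & HC).
  induction N.
  - apply (HS _ _ HT). intros; lia.
  - destruct (HC (fun m => m = N)) as [HN|HN].
    + exfalso. apply Hnp. exists N. intros A. split.
      * intros HA. destruct (U_nonempty U HU _ (HI _ _ HA HN)) as [m [Am ->]]. exact Am.
      * intros AN. apply (HS _ _ HN). intros m ->. exact AN.
    + apply (HS _ _ (HI _ _ IHN HN)). intros m [H1 H2]. lia.
Qed.

Lemma U_fin U (HU : is_ultrafilter U) n (P : nat -> nat -> Prop) :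
  (forall i, (i < n)%nat -> U (P i)) -> U (fun m => forall i, (i < n)%nat -> P i m).
Proof.
  destruct HU as (HT & H0 & HS & HI & HC).
  induction n; intros H.
  - apply (HS _ _ HT). intros; lia.
  - assert (A := IHn (fun i Hi => H i (Nat.lt_lt_succ_r _ _ Hi))).
    apply (HS _ _ (HI _ _ A (H n (Nat.lt_succ_diag_r n)))).
    intros m [H1 H2] i Hi. destruct (Nat.eq_dec i n) as [->|Hne]; [exact H2|].
    apply H1. lia.
Qed.

Lemma Rmin_div x y N : 0 < N -> Rmin (x / N) (y / N) = Rmin x y / N.
Proof.
  intros HN. unfold Rmin. destruct (Rle_dec (x/N) (y/N)) as [h1|h1]; destruct (Rle_dec x y) as [h2|h2]; try reflexivity.
  - exfalso. apply h2. apply Rmult_le_reg_r with (/N). apply Rinv_0_lt_compat; lra. exact h1.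
  - exfalso. apply h1. apply Rmult_le_compat_r. left; apply Rinv_0_lt_compat; lra. exact h2.
Qed.

Lemma circ_cycle n i j : (0 < n)%nat ->
  circle1_dist (INR i / INR n) (INR j / INR n) = cycle_dist n i j / INR n.
Proof.
  intros Hn. apply lt_0_INR in Hn. unfold circle1_dist, cycle_dist.
  rewrite <- Rmin_div by exact Hn.
  replace (INR i / INR n - INR j / INR n) with ((INR i - INR j) / INR n) by (field; lra).
  unfold Rdiv. rewrite Rabs_mult, (Rabs_pos_eq (/ INR n)) by (left; apply Rinv_0_lt_compat; lra).
  f_equal. field. lra.
Qed.

Lemma cone_to_approx (X : Type) (d : X -> X -> R) (hd : is_metric d) (U : (nat -> Prop) -> Prop) (b : nat -> X) (s : nat -> R) :
  nonprincipal_ultrafilter U -> scaling_seq s -> cone_contains_unit_circle d U b s ->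
  approximates_ngons d.
Proof.
  intros HU [Hs0 Hs] [f [_ Hf]] K HK n Lam.
  destruct n as [|n'].
  { exists (Rabs Lam + 1). split. pose proof (Rle_abs Lam); lra. split. pose proof (Rabs_pos Lam); lra.
    exists (fun _ => b 0%nat). intros i j Hi; lia. }
  set (n := S n'). set (N := INR n).
  assert (HN : 0 < N) by (apply lt_0_INR; unfold n; lia).
  set (eps := (1 - / K) / N).
  assert (HK1 : / K < 1) by (rewrite <- Rinv_1; apply Rinv_lt_contravar; lra).
  assert (Heps : 0 < eps) by (unfold eps; apply Rdiv_lt_0_compat; lra).
  set (P := fun i j m => Rabs (d (f (INR i / N) m) (f (INR j / N) m) / s m -
                                 circle1_dist (INR i / N) (INR j / N)) < eps).
  assert (Hint : forall i, (0 <= INR i / N < 1 <-> (i < n)%nat)).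
  { intros i; split.
    - intros [_ H]. apply INR_lt. fold N. apply Rmult_lt_reg_r with (/N). apply Rinv_0_lt_compat; lra.
      rewrite Rinv_r by lra. exact H.
    - intros H. apply lt_INR in H. fold N in H. pose proof (pos_INR i). split.
      + unfold Rdiv; apply Rmult_le_pos; [lra|left; apply Rinv_0_lt_compat; lra].
      + apply Rmult_lt_reg_r with N; [lra|]. unfold Rdiv. rewrite Rmult_assoc, Rinv_l by lra. lra. }
  assert (HP : U (fun m => forall i, (i < n)%nat -> forall j, (j < n)%nat -> P i j m)).
  { apply U_fin; [apply HU|]. intros i Hi. apply U_fin; [apply HU|]. intros j Hj.
    apply (Hf _ _ (proj2 (Hint i) Hi) (proj2 (Hint j) Hj)). exact Heps. }
  destruct (Hs (N * (Rabs Lam + 1))) as [N0 HN0].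
  pose proof (U_cofinite U HU N0) as HC.
  destruct HU as [HU _].
  destruct (U_nonempty U HU _ (proj1 (proj2 (proj2 (proj2 HU))) _ _ HP HC)) as [m [Hm1 Hm2]].
  specialize (HN0 m Hm2). specialize (Hs0 m).
  exists (s m / N). pose proof (Rle_abs Lam). pose proof (Rabs_pos Lam).
  assert (Hl : Rabs Lam + 1 < s m / N).
  { apply Rmult_lt_reg_r with N; [lra|]. unfold Rdiv. rewrite Rmult_assoc, Rinv_l by lra. lra. }
  split; [lra|]. split; [lra|].
  exists (fun i => f (INR i / N) m). intros i j Hi Hj. simpl.
  specialize (Hm1 i Hi j Hj). unfold P, N in Hm1. rewrite circ_cycle in Hm1 by (unfold n; lia).
  fold N in Hm1.
  destruct (Nat.eq_dec i j) as [<-|Hij].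
  { rewrite cycle_same. destruct hd as (_ & hd & _). rewrite (proj2 (hd _ _) eq_refl).
    rewrite Rmult_0_r. unfold Rdiv. rewrite Rmult_0_l, Rmult_0_r. lra. }
  pose proof (cycle_ge1 n i j Hi Hj Hij) as Hc.
  set (c := cycle_dist n i j) in *.
  set (q := d (f (INR i / N) m) (f (INR j / N) m) / s m) in *.
  set (D := c / N) in *.
  assert (HD : 1 / N <= D) by (unfold D, Rdiv; apply Rmult_le_compat_r; [left; apply Rinv_0_lt_compat|]; lra).
  assert (He : eps <= (1 - / K) * D).
  { replace eps with ((1 - / K) * (1 / N)) by (unfold eps, Rdiv; ring).
    apply Rmult_le_compat_l; lra. }
  apply abs_inv_lt in Hm1.
  assert (HK2 : 1 - / K <= K - 1).
  { assert (0 < / K) by (apply Rinv_0_lt_compat; lra).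
    assert (K * / K = 1) by (field; lra). nra. }
  assert (Hq1 : D / K <= q) by (unfold Rdiv; nra).
  assert (Hq2 : q <= K * D) by nra.
  replace (d (f (INR i / N) m) (f (INR j / N) m)) with (q * s m) by (unfold q; field; lra).
  replace (s m / N * c) with (s m * D) by (unfold D; field; lra).
  split.
  - unfold Rdiv in *. rewrite Rmult_assoc. rewrite (Rmult_comm q). apply Rmult_le_compat_l; lra.
  - rewrite (Rmult_comm q). rewrite (Rmult_comm K), Rmult_assoc. apply Rmult_le_compat_l; lra.
Qed.

Lemma key_est (n lam K c r circ : R) : 0 < n -> 0 < lam -> K = 1 + / n ->
  0 <= c <= n -> lam * c / K <= r <= K * (lam * c) -> Rabs (c - n * circ) <= 1 ->
  Rabs (r / (lam * n) - circ) <= 2 / n.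
Proof.
  intros Hn Hl HK Hc [H1 H2] H3.
  assert (Hin : n * / n = 1) by (field; lra).
  assert (Hi : 0 < / n) by (apply Rinv_0_lt_compat; lra).
  assert (HK0 : 0 < K) by lra.
  set (x := r / lam).
  assert (Hr : r = lam * x) by (unfold x; field; lra).
  rewrite Hr in H1, H2.
  assert (Hx1 : c <= K * x).
  { apply Rmult_le_reg_l with lam; [lra|]. 
    replace (lam * (K * x)) with (K * (lam * x)) by ring.
    assert (E : lam * c = (lam * c / K) * K) by (field; lra).
    rewrite E. nra. }
  assert (Hx2 : x <= K * c).
  { apply Rmult_le_reg_l with lam; [lra|]. nra. }
  assert (Hxc : Rabs (x - c) <= 1).
  { apply Rabs_le. rewrite HK in Hx1, Hx2.
    assert (c * / n <= 1) by (apply Rmult_le_reg_r with n; [lra|]; rewrite Rmult_assoc, Rinv_l by lra; lra).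
    assert (0 <= x) by nra.
    assert (x * / n <= 1 + / n) by nra.
    split; nra. }
  apply abs_inv in Hxc. apply abs_inv in H3.
  replace (r / (lam * n) - circ) with ((x - n * circ) / n) by (rewrite Hr; field; lra).
  unfold Rdiv. rewrite Rabs_mult, (Rabs_pos_eq (/ n)) by lra.
  apply Rmult_le_compat_r; [lra|]. apply Rabs_le. lra.
Qed.

Lemma idx_est n t t' : (0 < n)%nat -> 0 <= t < 1 -> 0 <= t' < 1 ->
  Rabs (cycle_dist n (fl (t * INR n)) (fl (t' * INR n)) - INR n * circle1_dist t t') <= 1.
Proof.
  intros Hn Ht Ht'. apply lt_0_INR in Hn. set (N := INR n) in *.
  assert (E : N * circle1_dist t t' = Rmin (Rabs (t * N - t' * N)) (N - Rabs (t * N - t' * N))).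
  { unfold circle1_dist.
    replace (t * N - t' * N) with ((t - t') * N) by ring.
    rewrite Rabs_mult, (Rabs_pos_eq N) by lra.
    replace (Rabs (t - t')) with ((Rabs (t - t') * N) / N) at 1 by (field; lra).
    replace (1 - Rabs (t - t')) with ((N - Rabs (t - t') * N) / N) by (field; lra).
    rewrite Rmin_div by lra. field. lra. }
  rewrite E. unfold cycle_dist. fold N.
  assert (h1 : 0 <= t * N) by nra. assert (h2 : 0 <= t' * N) by nra.
  destruct (fl_spec _ h1). destruct (fl_spec _ h2).
  assert (Hd : Rabs (Rabs (INR (fl (t * N)) - INR (fl (t' * N))) - Rabs (t * N - t' * N)) <= 1).
  { eapply Rle_trans; [apply Rabs_triang_inv2|]. apply Rabs_le. lra. }
  apply Rmin_lip; [exact Hd|].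
  replace (N - Rabs (INR (fl (t * N)) - INR (fl (t' * N))) - (N - Rabs (t * N - t' * N)))
    with (- (Rabs (INR (fl (t * N)) - INR (fl (t' * N))) - Rabs (t * N - t' * N))) by ring.
  rewrite Rabs_Ropp. exact Hd.
Qed.

Lemma approx_to_cone (X : Type) (d : X -> X -> R) (hd : is_metric d)
  (U : (nat -> Prop) -> Prop) (HU : nonprincipal_ultrafilter U) :
  approximates_ngons d -> exists b s, scaling_seq s /\ cone_contains_unit_circle d U b s.
Proof.
  intros H.
  assert (Hm : forall m : nat, exists p : R * (nat -> X), INR m < fst p /\ 0 < fst p /\
            bilip_ngon d (1 + / INR (S m)) (fst p) (S m) (snd p)).
  { intros m. assert (0 < / INR (S m)) by (apply Rinv_0_lt_compat, lt_0_INR; lia).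
    destruct (H (1 + / INR (S m)) ltac:(lra) (S m) (INR m)) as [l [h1 [h2 [g hg]]]].
    exists (l, g); simpl; auto. }
  set (pick := fun m => proj1_sig (constructive_indefinite_description _ (Hm m))).
  assert (Hp : forall m, INR m < fst (pick m) /\ 0 < fst (pick m) /\
            bilip_ngon d (1 + / INR (S m)) (fst (pick m)) (S m) (snd (pick m)))
    by (intros m; exact (proj2_sig (constructive_indefinite_description _ (Hm m)))).
  clearbody pick.
  set (s := fun m => fst (pick m) * INR (S m)).
  exists (fun m => snd (pick m) 0%nat), s.
  assert (HNm : forall m, 0 < INR (S m)) by (intros; apply lt_0_INR; lia).
  assert (HNm1 : forall m, INR (S m) = INR m + 1) by (intros; apply S_INR).
  split.
  { split.
    - intros m. destruct (Hp m) as (_ & h & _). unfold s. specialize (HNm m). nra.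
    - intros M. destruct (nat_unb M) as [N HN]. exists N. intros m Hm'.
      apply le_INR in Hm'. destruct (Hp m) as (h1 & h2 & _). unfold s.
      specialize (HNm1 m). pose proof (pos_INR m). nra. }
  exists (fun t m => snd (pick m) (fl (t * INR (S m)))).
  split.
  - intros t Ht. exists 2. intros m. destruct (Hp m) as (h1 & h2 & h3).
    assert (Hi : (fl (t * INR (S m)) < S m)%nat).
    { specialize (HNm m). apply fl_lt; nra. }
    destruct (h3 _ 0%nat Hi ltac:(lia)) as [_ Hb].
    pose proof (cycle_le (S m) (fl (t * INR (S m))) 0).
    pose proof (cycle_ge0 (S m) (fl (t * INR (S m))) 0 Hi ltac:(lia)).
    assert (hK : / INR (S m) <= 1).
    { rewrite <- Rinv_1. apply Rinv_le_contravar; [lra|]. rewrite HNm1. pose proof (pos_INR m); lra. }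
    specialize (HNm m). unfold s. unfold Rdiv.
    apply Rmult_le_reg_r with (fst (pick m) * INR (S m)); [nra|].
    rewrite Rmult_assoc, Rinv_l by nra. rewrite Rmult_1_r.
    eapply Rle_trans; [exact Hb|].
    apply Rle_trans with (2 * (fst (pick m) * cycle_dist (S m) (fl (t * INR (S m))) 0)).
    + apply Rmult_le_compat_r; [apply Rmult_le_pos; lra|lra].
    + apply Rmult_le_compat_l; [lra|]. apply Rmult_le_compat_l; lra.
  - intros t t' Ht Ht' eps Heps.
    destruct (nat_unb (2 / eps)) as [N0 HN0].
    apply (proj1 (proj2 (proj2 (proj1 HU)))) with (fun m => (N0 <= m)%nat).
    { apply U_cofinite; exact HU. }
    intros m Hm'. destruct (Hp m) as (h1 & h2 & h3).
    assert (Hi : (fl (t * INR (S m)) < S m)%nat) by (specialize (HNm m); apply fl_lt; nra).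
    assert (Hj : (fl (t' * INR (S m)) < S m)%nat) by (specialize (HNm m); apply fl_lt; nra).
    pose proof (idx_est (S m) t t' ltac:(lia) Ht Ht') as Hidx.
    pose proof (cycle_le (S m) (fl (t * INR (S m))) (fl (t' * INR (S m)))).
    pose proof (cycle_ge0 (S m) _ _ Hi Hj).
    pose proof (key_est (INR (S m)) (fst (pick m)) (1 + / INR (S m)) (cycle_dist (S m) (fl (t * INR (S m))) (fl (t' * INR (S m))))
                  (d (snd (pick m) (fl (t * INR (S m)))) (snd (pick m) (fl (t' * INR (S m)))))
                  (circle1_dist t t') (HNm m) h2 eq_refl ltac:(lra) (h3 _ _ Hi Hj) Hidx) as Hk.
    unfold s. eapply Rle_lt_trans; [exact Hk|].
    apply le_INR in Hm'. rewrite HNm1.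
    assert (2 < eps * (INR m + 1)).
    { apply Rmult_lt_reg_r with (/ eps). apply Rinv_0_lt_compat; lra.
      replace (eps * (INR m + 1) * / eps) with (INR m + 1) by (field; lra). unfold Rdiv in HN0. lra. }
    apply Rmult_lt_reg_r with (INR m + 1). pose proof (pos_INR m); lra.
    unfold Rdiv. rewrite Rmult_assoc, Rinv_l by (pose proof (pos_INR m); lra). lra.
Qed.

Theorem corollary3p8 (X : Type) (d : X -> X -> R) (hd : is_metric d) :
  (~ exists (U : (nat -> Prop) -> Prop) (b : nat -> X) (s : nat -> R),
       nonprincipal_ultrafilter U /\ scaling_seq s /\
       cone_contains_unit_circle d U b s)
  <-> ~ approximates_ngons d.
Proof.
  split.
  - intros H Happ. apply H. destruct UFaux.exists_nonprincipal as [U [HU _]].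
    destruct (approx_to_cone X d hd U HU Happ) as [b [s [Hs Hc]]].
    exists U, b, s. auto.
  - intros H [U [b [s [HU [Hs Hc]]]]]. apply H.
    exact (cone_to_approx X d hd U b s HU Hs Hc).
Qed.
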